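(* Consider a uniform grid model. (i) For every $\theta\in(0,\pi/2)\cup(\pi/2,\pi)$ there exist $k\in\mathbb{N}$ and $c>0$ (possibly depending on the model and $\theta$) such that $\mathsf{LEI}_k(\theta,c)\neq\varnothing$. (ii) If the model is not vertically degenerate, the same holds for $\theta=\pi/2$. (iii) If the model is not horizontally degenerate, the same holds for $\theta=0$.
   Context: Fix an integer $L\ge2$; $\mathcal{D}_n$ is the set of closed squares obtained by dividing $[0,1]^2$ into an $L^n\times L^n$ grid. A grid model is a probability distribution $\mathfrak X$ on finite sets of distinct squares of $\mathcal{D}_1$ (random bounded number $\mathbf L$, $\mathbb{E}[\mathbf L]=L$). Random sets: $\mathcal{S}_0=\{[0,1]^2\}$; given $\mathcal{S}_n$, for each $R\in\mathcal{S}_n$ independently sample from $\mathfrak X$ and map the chosen squares into $R$ via the natural homothety; $\mathcal{S}_{n+1}$ is the resulting collection, $S_n=\bigcup\mathcal{S}_n$. Uniform: $\mathbb{P}[Q\in\mathcal{S}_1]=1/L$ for each $Q\in\mathcal{D}_1$. Vertically degenerate: a.s. $\mathcal{S}_1$ contains exactly one square in each column; horizontally degenerate: a.s. exactly one square in each row. Let $\Lambda=[L]^2$; for $\boldsymbol\lambda=((i_1,j_1),\dots,(i_n,j_n))\in\Lambda^n$, $Q(\boldsymbol\lambda)$ is the square of $\mathcal{D}_n$ with top-right corner $\sum_{m=1}^n(i_m,j_m)L^{-m}$. $\operatorname{proj}_\theta(x)=\langle x,(-\sin\theta,\cos\theta)\rangle$, $\ell(\theta,t)=\operatorname{proj}_\theta^{-1}(t)$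 (the line with direction $(\cos\theta,\sin\theta)$ through $t(-\sin\theta,\cos\theta)$); $|\cdot|$ is one-dimensional Lebesgue measure. For $\alpha\in\Lambda$, $\mathsf{LEI}_k(\theta,\alpha,c)$ is the set of $\boldsymbol\eta\in\{\alpha\}\times\Lambda^{k-1}$ such that for every $t$ with $\ell(\theta,t)\cap Q(\boldsymbol\eta)\neq\varnothing$, $\mathbb{E}\bigl[|\ell(\theta,t)\cap S_1\cap Q(\alpha)^c|\bigm| Q(\alpha)\in\mathcal{S}_1\bigr]\ge c/L$; $\mathsf{LEI}_k(\theta,c)=\bigcup_{\alpha\in\Lambda}\mathsf{LEI}_k(\theta,\alpha,c)$. *)

(* Defs.v *)
From HB Require Import structures.
From mathcomp Require Import all_boot all_order all_algebra.
From mathcomp Require Import all_classical all_reals all_analysis.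
Set Implicit Arguments. Unset Strict Implicit. Unset Printing Implicit Defensive.
Import Order.TTheory GRing.Theory Num.Theory.
Local Open Scope classical_set_scope.
Local Open Scope ring_scope.

Section GridDefs.
Variables (R : realType) (L : nat).

(* Lambda = [L]^2, digits taken 0-based: (i,j) with 0 <= i,j < L;
   i = column (x) index, j = row (y) index. *)
Definition Lam := ('I_L * 'I_L)%type.

(* x- and y-coordinates of the bottom-left corner of Q(lambda) *)
Fixpoint xcorner (s : seq Lam) : R :=
  match s with [::] => 0 | d :: s' => ((nat_of_ord d.1)%:R + xcorner s') / L%:R end.
Fixpoint ycorner (s : seq Lam) : R :=
  match s with [::] => 0 | d :: s' => ((nat_of_ord d.2)%:R + ycorner s') / L%:R end.

(* Q(lambda): the closed square of D_n (n = size lambda), nested in Q(lambda_1..lambda_{n-1}) *)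
Definition Qsq (s : seq Lam) : set (R * R) :=
  [set x | xcorner s <= x.1 <= xcorner s + L%:R ^- size s /\
           ycorner s <= x.2 <= ycorner s + L%:R ^- size s].

Definition S1 (A : {set Lam}) : set (R * R) :=
  [set x | exists b : Lam, b \in A /\ Qsq [:: b] x].

Definition proj (th : R) (x : R * R) : R := - x.1 * sin th + x.2 * cos th.
Definition ell (th t : R) : set (R * R) := [set x | proj th x = t].

(* arc-length parametrisation of ell(theta,t) *)
Definition lpar (th t s : R) : R * R :=
  (- t * sin th + s * cos th, t * cos th + s * sin th).

Definition line_len (th t : R) (X : set (R * R)) : \bar R :=
  lebesgue_measure [set s : R | X (lpar th t s)].

Definition grid_model (p : {set Lam} -> R) : Prop :=
  (forall A, 0 <= p A) /\ \sum_(A : {set Lam}) p A = 1 /\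
  \sum_(A : {set Lam}) p A * #|A|%:R = L%:R.

Definition prob_in (p : {set Lam} -> R) (a : Lam) : R :=
  \sum_(A : {set Lam} | a \in A) p A.

Definition uniform (p : {set Lam} -> R) : Prop :=
  forall a : Lam, prob_in p a = L%:R^-1.

Definition vert_degenerate (p : {set Lam} -> R) : Prop :=
  forall A, 0 < p A -> forall i : 'I_L, #|[set j : 'I_L | (i, j) \in A]| = 1%N.

Definition horiz_degenerate (p : {set Lam} -> R) : Prop :=
  forall A, 0 < p A -> forall j : 'I_L, #|[set i : 'I_L | (i, j) \in A]| = 1%N.

Definition cond_exp_len (p : {set Lam} -> R) (a : Lam) (th t : R) : \bar R :=
  ((\sum_(A : {set Lam} | a \in A)
      (p A)%:E * line_len th t (S1 A `&` ~` Qsq [:: a]))%E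
   * ((prob_in p a)^-1)%:E)%E.

Definition LEIa (p : {set Lam} -> R) (k : nat) (th : R) (a : Lam) (c : R)
  : set (seq Lam) :=
  [set eta | size eta = k /\ ohead eta = Some a /\
     forall t : R, ell th t `&` Qsq eta !=set0 ->
       ((c / L%:R)%:E <= cond_exp_len p a th t)%E].

Definition LEI (p : {set Lam} -> R) (k : nat) (th c : R) : set (seq Lam) :=
  \bigcup_(a in [set: Lam]) LEIa p k th a c.

End GridDefs.

(* Main.v *)
Require Import Defs.
From HB Require Import structures.
From mathcomp Require Import all_boot all_order all_algebra.
From mathcomp Require Import all_classical all_reals all_analysis.
From mathcomp Require Import ring lra.
Import Order.TTheory GRing.Theory Num.Theory.
Local Open Scope classical_set_scope.
Local Open Scope ring_scope.

Lemma digits_exist (R : realType) (L : nat) (n : nat) : (0 < L)%N ->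
  forall I J, (I < L ^ n)%N -> (J < L ^ n)%N ->
  exists e : seq (Lam L), size e = n /\
    xcorner R e = I%:R / (L%:R ^+ n) /\ ycorner R e = J%:R / (L%:R ^+ n).
Proof.
move=> L0; elim: n => [|n IH] I J.
  rewrite expn0 !ltnS !leqn0 => /eqP -> /eqP ->.
  by exists [::]; rewrite /= !mul0r.
have LnP : (0 < L ^ n)%N by rewrite expn_gt0 L0.
move=> HI HJ.
have HI1 : (I %/ L ^ n < L)%N.
  by rewrite ltn_divLR // -expnS.
have HJ1 : (J %/ L ^ n < L)%N by rewrite ltn_divLR // -expnS.
have [e [se [xe ye]]] := IH (I %% L ^ n)%N (J %% L ^ n)%N (ltn_pmod _ LnP) (ltn_pmod _ LnP).
exists ((Ordinal HI1, Ordinal HJ1) :: e); split; first by rewrite /= se.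
have Ln0 : (L%:R ^+ n : R) != 0 by rewrite expf_neq0 // pnatr_eq0 -lt0n.
have L0' : (L%:R : R) != 0 by rewrite pnatr_eq0 -lt0n.
split => /=; [rewrite xe | rewrite ye].
- rewrite {3}(divn_eq I (L ^ n)) natrD natrM natrX exprS.
  by field; rewrite Ln0 L0'.
- rewrite {3}(divn_eq J (L ^ n)) natrD natrM natrX exprS.
  by field; rewrite Ln0 L0'.
Qed.

Lemma index_exist (R : realType) (N : nat) (x : R) : (0 < N)%N -> 0 <= x <= 1 ->
  exists I, (I < N)%N /\ I%:R / N%:R <= x <= I.+1%:R / N%:R.
Proof.
move=> N0 /andP[x0 x1].
have NR : (0 : R) < N%:R by rewrite ltr0n.
have xN0 : 0 <= x * N%:R by rewrite mulr_ge0 // ler0n.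
have /andP[t1 t2] := truncn_itv xN0.
case: (ltnP (Num.truncn (x * N%:R)) N) => hN.
  exists (Num.truncn (x * N%:R)); split => //.
  by rewrite !ler_pdivrMr // ?ler_pdivlMr // t1 ltW.
exists N.-1; split; first by rewrite prednK // leqnn. 
rewrite prednK //.
have : (N%:R : R) <= x * N%:R.
  by apply: le_trans t1; rewrite ler_nat.
rewrite -{1}(mul1r N%:R) ler_pM2r // => x1'.
have -> : x = 1 by apply/eqP; rewrite eq_le x1 x1'.
rewrite divff ?lt0r_neq0 // lexx andbT.
by rewrite ler_pdivrMr // mul1r ler_nat leq_pred.
Qed.

Lemma sum_bound (R : realType) (L : nat) (p : {set Lam L} -> R)
  (F : {set Lam L} -> R) : grid_model p ->
  (forall A, 0 < p A -> #|A|%:R <= F A) ->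
  L%:R <= \sum_A p A * F A.
Proof.
move=> [p0 [p1 pL]] HF; rewrite -pL; apply: ler_sum => A _.
have [->|pA] := eqVneq (p A) 0; first by rewrite !mul0r.
have pA' : 0 < p A by rewrite lt0r pA p0.
by rewrite ler_wpM2l ?p0 // HF.
Qed.

Lemma card_inj_bound (T : finType) (A : {set T}) (f : T -> nat) (s : seq nat) :
  {in A &, injective f} -> (forall b, b \in A -> f b \in s) ->
  (#|A| <= size (undup s))%N.
Proof.
move=> finj fs.
rewrite cardE -(size_map f).
apply: uniq_leq_size.
  rewrite map_inj_in_uniq ?enum_uniq // => x y; rewrite !mem_enum; exact: finj.
by move=> y /mapP [x]; rewrite mem_enum => /fs xs ->; rewrite mem_undup.
Qed.

Definition gg {R : realType} {L : nat} (s c : R) (a : Lam L) : R :=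
  - (a.1 : nat)%:R * s + (a.2 : nat)%:R * c.

Lemma comb_diag (R : realType) (L : nat) (p : {set Lam L} -> R) (s c : R) :
  (2 <= L)%N -> grid_model p -> uniform p -> 0 < s -> c != 0 ->
  exists A a b, 0 < p A /\ a \in A /\ b \in A /\ a != b /\
     `|gg s c a - gg s c b| < s + `|c|.
Proof.
move=> L2 gm un s0 c0.
have L0 : (0 < L)%N by apply: leq_trans L2.
have L1 : (L.-1 < L)%N by rewrite prednK.
set w := s + `|c|.
have w0 : 0 < w by rewrite /w; have := normr_ge0 c; lra.
pose bs : Lam L := (Ordinal L0, if 0 <= c then Ordinal L1 else Ordinal L0).
pose M := gg s c bs.
have LR : (L.-1)%:R = L%:R - 1 :> R by rewrite -{2}(prednK L0) -natr1 addrK.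
have Hb : forall b : Lam L, 0 <= M - gg s c b /\ M - gg s c b <= (L.-1)%:R * w /\
     (b != bs -> 0 < M - gg s c b).
  move=> [b1 b2].
  have hb1 : (b1 : nat)%:R <= (L.-1)%:R :> R by rewrite ler_nat -ltnS prednK.
  have hb2 : (b2 : nat)%:R <= (L.-1)%:R :> R by rewrite ler_nat -ltnS prednK.
  have hb1' : 0 <= (b1 : nat)%:R :> R by [].
  have hb2' : 0 <= (b2 : nat)%:R :> R by [].
  rewrite /M /gg /bs /w /=.
  case: (lerP 0 c) => hc /=.
    rewrite ger0_norm //.
    split; first by nra.
    split; first by nra.
    rewrite xpair_eqE negb_and => /orP [h|h].
    + have : (1 : R) <= (b1 : nat)%:R.
        by rewrite ler1n lt0n; apply: contra h => /eqP h; apply/eqP/val_inj.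
      have : 0 < c by rewrite lt0r c0.
      nra.
    + have : (b2 : nat)%:R <= (L.-1)%:R - 1 :> R.
        rewrite lerBrDr natr1 ler_nat.
        have : (b2 <= L.-1)%N by rewrite -ltnS prednK. rewrite leq_eqVlt => /orP [/eqP e|//].
        by case/negP: h; apply/eqP/val_inj.
      have : 0 < c by rewrite lt0r c0.
      nra.
  - rewrite ltr0_norm //.
    split; first by nra.
    split; first by nra.
    rewrite xpair_eqE negb_and => /orP [h|h].
    + have : (1 : R) <= (b1 : nat)%:R.
        by rewrite ler1n lt0n; apply: contra h => /eqP h; apply/eqP/val_inj.
      nra.
    + have : (1 : R) <= (b2 : nat)%:R.
        by rewrite ler1n lt0n; apply: contra h => /eqP h; apply/eqP/val_inj.
      nra.
apply: contrapT => Hn.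
pose psi (b : Lam L) := Num.truncn (((L.-1)%:R * w - (M - gg s c b)) / w).
have key : forall A, 0 < p A -> {in A :\ bs &, injective psi}.
  move=> A pA a b; rewrite !in_setD1 => /andP [abs aA] /andP [bbs bA] e.
  apply: contrapT => nab; apply: Hn; exists A, a, b.
  do 4 (split => //); first by apply/eqP.
  have [ha1 [ha2 _]] := Hb a; have [hb1 [hb2 _]] := Hb b.
  have xa0 : 0 <= ((L.-1)%:R * w - (M - gg s c a)) / w.
    by rewrite divr_ge0 ?subr_ge0 // ltW.
  have xb0 : 0 <= ((L.-1)%:R * w - (M - gg s c b)) / w.
    by rewrite divr_ge0 ?subr_ge0 // ltW.
  have /andP [t1 t2] := truncn_itv xa0.
  have /andP [t3 t4] := truncn_itv xb0.
  rewrite /psi in e; rewrite e in t1 t2.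
  move: t1 t2 t3 t4; rewrite -!natr1.
  set n := (Num.truncn _)%:R.
  rewrite !ler_pdivlMr // !ltr_pdivrMr // => t1 t2 t3 t4.
  rewrite ltr_norml; apply/andP; split; nra.
have H : forall A, 0 < p A -> #|A|%:R <= (L.-1)%:R + (bs \in A)%:R :> R.
  move=> A pA; rewrite (cardsD1 bs A) natrD addrC lerD2r ler_nat.
  have := @card_inj_bound _ (A :\ bs) psi (iota 0 L.-1) (key _ pA).
  rewrite (undup_id (iota_uniq _ _)) size_iota; apply => b.
  rewrite in_setD1 => /andP [bbs _]; rewrite mem_iota add0n leq0n /=.
  have [h1 [h2 h3]] := Hb b.
  rewrite /psi truncn_lt_nat; last by rewrite divr_ge0 ?subr_ge0 // ltW.
  rewrite ltr_pdivrMr //; have := h3 bbs; lra.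
have h := @sum_bound _ _ p _ gm H.
have e : \sum_A p A * ((L.-1)%:R + (bs \in A)%:R) = (L.-1)%:R + prob_in p bs.
  rewrite (eq_bigr (fun A => p A * (L.-1)%:R + p A * (bs \in A)%:R)); last first.
    by move=> A _; rewrite mulrDr.
  rewrite big_split /= -big_distrl /=.
  case: gm => [_ [-> _]]; rewrite mul1r; congr (_ + _).
  rewrite /prob_in [RHS]big_mkcond /=; apply: eq_bigr => A _.
  by case: (bs \in A); rewrite ?mulr1 ?mulr0.
move: h; rewrite e.
rewrite un LR.
have : (2 : R) <= L%:R by rewrite ler_nat.
move=> h2 h.
have : 1 <= L%:R^-1 :> R by lra.
rewrite invf_ge1 ?ltr0n //; lra.
Qed.

Lemma comb_line (R : realType) (L : nat) (p : {set Lam L} -> R) (f : Lam L -> nat) :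
  grid_model p -> (forall b, (f b < L)%N) ->
  (exists A0 i0, 0 < p A0 /\ (i0 < L)%N /\ forall b, b \in A0 -> f b != i0) ->
  exists A a b, 0 < p A /\ a \in A /\ b \in A /\ a != b /\ f a = f b.
Proof.
move=> gm fL [A0 [i0 [pA0 [i0L Hi0]]]].
apply: contrapT => Hn.
have key : forall A, 0 < p A -> {in A &, injective f}.
  move=> A pA a b aA bA fab; apply: contrapT => nab.
  by apply: Hn; exists A, a, b; split => //; split => //; split => //; split => //; apply/eqP.
have := @sum_bound _ _ p (fun A => L%:R - (A == A0)%:R) gm.
have H : forall A, 0 < p A -> #|A|%:R <= L%:R - (A == A0)%:R :> R.
  move=> A pA; have [->|nA] := eqVneq A A0.
    rewrite -natrB //; last by rewrite (leq_trans _ (leq_ltn_trans (leq0n _) i0L)).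
    rewrite ler_nat.
    have := @card_inj_bound _ A0 f (seq.filter (predC1 i0) (iota 0 L)) (key _ pA0).
    rewrite (undup_id (filter_uniq _ (iota_uniq 0 L))).
    have sz : size [seq x <- iota 0 L | predC1 i0 x] = L.-1.
      have := count_predC (pred1 i0) (iota 0 L).
      rewrite size_iota count_uniq_mem ?iota_uniq // mem_iota /= i0L add1n => h.
      by rewrite size_filter -[in RHS]h.
    rewrite sz subn1; apply => b bA.
    by rewrite mem_filter /= Hi0 // mem_iota fL.
  rewrite subr0 ler_nat.
  have := @card_inj_bound _ A f (iota 0 L) (key _ pA).
  rewrite (undup_id (iota_uniq _ _)) size_iota; apply => b _.
  by rewrite mem_iota fL.
move=> /(_ H).
under eq_bigr do rewrite mulrBr.
rewrite sumrB -big_distrl /=.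
case: gm => [_ [-> _]]; rewrite mul1r.
rewrite (bigD1 A0) //= eqxx mulr1 big1 ?addr0; last first.
  by move=> B /negbTE ->; rewrite mulr0.
by move=> h; have := ltW pA0; lra.
Qed.

Lemma QsqconsE (R : realType) (L : nat) (b : Lam L) (e : seq (Lam L)) (y : R * R) :
  (0 < L)%N ->
  Qsq (b :: e) y <->
  ((b.1 : nat)%:R + xcorner R e <= L%:R * y.1 <= (b.1 : nat)%:R + xcorner R e + L%:R ^- size e /\
   (b.2 : nat)%:R + ycorner R e <= L%:R * y.2 <= (b.2 : nat)%:R + ycorner R e + L%:R ^- size e).
Proof.
move=> L0.
have LR : (0 : R) < L%:R by rewrite ltr0n.
rewrite /Qsq /= exprSr invfM.
have h : forall u v z : R, (u / L%:R <= z <= u / L%:R + v / L%:R) =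
    (u <= L%:R * z <= u + v).
  move=> u v z; rewrite -mulrDl !ler_pdivrMr // !ler_pdivlMr // ![_ * L%:R]mulrC.
  done.
by rewrite !h.
Qed.

Lemma aux_bound (R : realType) (u tau s c r : R) : -(r/2) <= u <= r/2 -> 0 <= tau <= r/4 ->
  0 <= s <= 1 -> -1 <= c <= 1 -> 0 < r -> `|- u * s + tau * c| < r /\ `|u * c + tau * s| < r.
Proof.
move=> /andP[u1 u2] /andP[t1 t2] /andP[s1 s2] /andP[c1 c2] r0.
rewrite !ltr_norml; split; apply/andP; split; nra.
Qed.

Lemma in_unit (R : realType) (k : nat) (Y Z l r : R) : Z = k%:R + l ->
  r <= l <= 1 - r -> - r < Y - Z < r -> k%:R < Y < k%:R + 1.
Proof. by move=> -> /andP [h1 h2] /andP [h3 h4]; apply/andP; split; lra. Qed.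

Lemma nat_near (R : realType) (m k : nat) (Y : R) :
  k%:R < Y < k%:R + 1 -> m%:R <= Y <= m%:R + 1 -> m = k.
Proof.
move=> /andP [h1 h2] /andP [h3 h4].
have h5 : (m < k.+1)%N by rewrite -(ltr_nat R) -natr1; lra.
have h6 : (k < m.+1)%N by rewrite -(ltr_nat R) -natr1; lra.
by apply: anti_leq; apply/andP; split; rewrite -ltnS.
Qed.

Lemma wk (R : realType) (k : nat) (Y : R) :
  k%:R < Y < k%:R + 1 -> k%:R <= Y <= k%:R + 1.
Proof. by move=> /andP [h1 h2]; rewrite !ltW. Qed.

Lemma leb_itv (R: realType) (x y : R) : x < y -> lebesgue_measure `[x, y]%classic = (y - x)%:E.
Proof. move=> h. rewrite lebesgue_measure_itv /= lte_fin h. by rewrite EFinB. Qed.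

Lemma geo (R : realType) (L : nat) (p : {set Lam L} -> R) (th : R) :
  (2 <= L)%N -> grid_model p -> uniform p -> 0 <= sin th ->
  forall A0 a b, 0 < p A0 -> a \in A0 -> b \in A0 -> a != b ->
  `|gg (sin th) (cos th) a - gg (sin th) (cos th) b| < sin th + `|cos th| ->
  exists k c, 0 < c /\ LEI p k th c !=set0.
Proof.
move=> L2 gm un s0 A0 a b pA0 aA bA ab.
have L0 : (0 < L)%N by apply: leq_trans L2.
have LR : (0:R) < L%:R by rewrite ltr0n.
have sc : sin th ^+ 2 + cos th ^+ 2 = 1 by rewrite sin2cos2 subrK.
move: s0 sc; set s := sin th; set c := cos th => s0 sc.
have cn2 : `|c| ^+ 2 = c ^+ 2 by rewrite real_normK // num_real.
have cn0 : 0 <= `|c| by [].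
have s1 : s <= 1 by nra.
have c1 : `|c| <= 1 by nra.
have cb : -1 <= c <= 1 by rewrite -ler_norml.
set w := s + `|c|.
have w0 : 0 < w by rewrite /w; nra.
set dl := gg s c a - gg s c b => hal.
set q := dl / (2 * w).
have w20 : 0 < 2 * w by rewrite mulr_gt0.
have hq1 : q * (2 * w) = dl by rewrite /q divfK // gt_eqF.
have hq : `|q| * (2 * w) < w by rewrite -(gtr0_norm w20) -normrM hq1.
have hq2 : `|q| < 1/2 by nra.
have hqq : -`|q| <= q <= `|q| by rewrite -ler_norml.
set la := 1/2 - q; set lb := 1/2 + q; set r := 1/2 - `|q|.
have r0 : 0 < r by rewrite /r; lra.
pose yf (l : R) := if 0 <= c then l else 1 - l.
have yfb : r <= yf lb <= 1 - r by rewrite /yf /r /lb; case: ifP => _; lra.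
have rlb : r <= lb <= 1 - r by rewrite /r /lb; lra.
have yfa : 0 <= yf la <= 1 by rewrite /yf /la; case: ifP => _; lra.
have Lpz : - ((a.1 : nat)%:R + 1 - la) * s + ((a.2 : nat)%:R + yf la) * c =
           - ((b.1 : nat)%:R + 1 - lb) * s + ((b.2 : nat)%:R + yf lb) * c.
  move: hq1; rewrite /dl /gg /yf /la /lb /w; case: ifP => hc.
  - rewrite ger0_norm // => hq1; nra.
  - rewrite ltr0_norm ?ltNge ?hc // => hq1; nra.
have [n hn] : exists n, (L%:R ^+ n)^-1 <= r / 4 :> R.
  exists (Num.truncn (4 / r)).+1.
  have h1 := truncnS_gt (4 / r).
  have h2 := ltn_expl (Num.truncn (4 / r)).+1 L2.
  rewrite -(ltr_nat R) natrX in h2.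
  move: h1 h2; set m := (Num.truncn (4 / r)).+1 => h1 h2.
  set N := L%:R ^+ m in h2 *.
  have N0 : 0 < N by apply: lt_trans h2; rewrite ltr0n.
  have h3 : 4 / r < N by apply: lt_trans h2.
  rewrite -[N^-1]div1r ler_pdivrMr //.
  move: h3; rewrite ltr_pdivrMr // => h3; lra.
have Ln0 : (0 < L ^ n)%N by rewrite expn_gt0 L0.
have [I [HI hI]] := @index_exist R (L ^ n) (1 - la) Ln0 ltac:(rewrite /la; lra).
have [J [HJ hJ]] := @index_exist R (L ^ n) (yf la) Ln0 yfa.
have [e [se [xe ye]]] := @digits_exist R L n L0 I J HI HJ.
rewrite natrX in hI hJ.
exists n.+1, (p A0 * r * L%:R / 4); split.
  by apply: divr_gt0 => //; apply: mulr_gt0 => //; apply: mulr_gt0.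
exists (a :: e); exists a => //.
split; first by rewrite /= se.
split; first by [].
move=> t [x [ellx Qx]].
move: Qx; rewrite QsqconsE // se xe ye => -[/andP[x1l x1u] /andP[x2l x2u]].
move: hn hI hJ x1l x1u x2l x2u; set N := L%:R ^+ n => hn hI hJ x1l x1u x2l x2u.
have N0 : 0 < N by rewrite exprn_gt0.
have hI1 : I.+1%:R / N = I%:R / N + N^-1 by rewrite -natr1 mulrDl mul1r.
have hJ1 : J.+1%:R / N = J%:R / N + N^-1 by rewrite -natr1 mulrDl mul1r.
rewrite hI1 in hI; rewrite hJ1 in hJ.
set Zb1 := (b.1 : nat)%:R + 1 - lb.
set Zb2 := (b.2 : nat)%:R + yf lb.
set u := L%:R * t - (- Zb1 * s + Zb2 * c).
have hu : `|u| <= r / 2.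
  have et : L%:R * t = - (L%:R * x.1) * s + (L%:R * x.2) * c.
    by rewrite -ellx /Defs.proj -/s -/c; ring.
  set X1 := L%:R * x.1 - ((a.1 : nat)%:R + (1 - la)).
  set X2 := L%:R * x.2 - ((a.2 : nat)%:R + yf la).
  have hX1 : -N^-1 <= X1 <= N^-1 by rewrite /X1; lra.
  have hX2 : -N^-1 <= X2 <= N^-1 by rewrite /X2; lra.
  have eu : u = - X1 * s + X2 * c.
    rewrite /u /Zb1 /Zb2 -Lpz et /X1 /X2; ring.
  rewrite eu ler_norml; apply/andP; split; nra.
set sg0 := (Zb1 * c + Zb2 * s) / L%:R.
set d := r / (4 * L%:R).
have d0 : 0 < d by rewrite /d divr_gt0 // mulr_gt0.
have sub : `[sg0, sg0 + d]%classic `<=`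
    [set sg | (S1 A0 `&` ~` Qsq [:: a]) (lpar th t sg)].
  move=> sg /=; rewrite in_itv /= => /andP [g1 g2].
  set tau := L%:R * sg - (Zb1 * c + Zb2 * s).
  have htau : 0 <= tau <= r / 4.
    have e1 : L%:R * sg0 = Zb1 * c + Zb2 * s by rewrite /sg0 mulrC divfK // gt_eqF.
    have e2 : L%:R * d = r / 4 by rewrite /d; field; rewrite gt_eqF.
    have m1 : L%:R * sg0 <= L%:R * sg by rewrite ler_pM2l.
    have m2 : L%:R * sg <= L%:R * (sg0 + d) by rewrite ler_pM2l.
    rewrite mulrDr e1 e2 in m2; rewrite e1 in m1.
    by rewrite /tau; apply/andP; split; lra.
  have ey1 : L%:R * (lpar th t sg).1 - Zb1 = - u * s + tau * c.
    have : L%:R * (lpar th t sg).1 - Zb1 - (- u * s + tau * c) =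
        Zb1 * (s ^+ 2 + c ^+ 2 - 1).
      by rewrite /lpar /= -/s -/c /u /tau; ring.
    by rewrite sc subrr mulr0 => /eqP; rewrite subr_eq0 => /eqP.
  have ey2 : L%:R * (lpar th t sg).2 - Zb2 = u * c + tau * s.
    have : L%:R * (lpar th t sg).2 - Zb2 - (u * c + tau * s) =
        Zb2 * (s ^+ 2 + c ^+ 2 - 1).
      by rewrite /lpar /= -/s -/c /u /tau; ring.
    by rewrite sc subrr mulr0 => /eqP; rewrite subr_eq0 => /eqP.
  have hun : - (r / 2) <= u <= r / 2 by rewrite -ler_norml.
  have [hy1 hy2] := @aux_bound _ u tau s c r hun htau (ltac:(by apply/andP; split) : 0 <= s <= 1) cb r0.
  rewrite -ey1 in hy1; rewrite -ey2 in hy2.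
  move: hy1 hy2; set Y1 := L%:R * _; set Y2 := L%:R * _.
  rewrite !ltr_norml => /andP [y1l y1u] /andP [y2l y2u].
  have hb1 : (b.1 : nat)%:R < Y1 < (b.1 : nat)%:R + 1.
    apply: (@in_unit _ _ _ Zb1 (1 - lb) r); first by rewrite /Zb1 addrA.
      by move: rlb => /andP [? ?]; apply/andP; split; lra.
    by rewrite y1l y1u.
  have hb2 : (b.2 : nat)%:R < Y2 < (b.2 : nat)%:R + 1.
    apply: (@in_unit _ _ _ Zb2 (yf lb) r) => //.
    by rewrite y2l y2u.
  have hx0 : xcorner R (L:=L) [::] = 0 by [].
  have hy0 : ycorner R (L:=L) [::] = 0 by [].
  split.
    exists b; split => //.
    rewrite QsqconsE // hx0 hy0 /= expr0 invr1 !addr0 -/Y1 -/Y2.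
    by split; apply: wk.
  rewrite /= QsqconsE // hx0 hy0 /= expr0 invr1 !addr0 -/Y1 -/Y2 => -[ha1 ha2].
  have e1 := @nat_near _ _ _ _ hb1 ha1.
  have e2 := @nat_near _ _ _ _ hb2 ha2.
  move/eqP: ab; apply; rewrite [a]surjective_pairing [b]surjective_pairing.
  by congr pair; apply: val_inj.
have hl : ((d%:E) <= line_len th t (S1 A0 `&` ~` Qsq [:: a]))%E.
  rewrite /line_len; apply: le_trans (@le_outer_measure _ _ lebesgue_measure _ _ sub).
  have E := @leb_itv R sg0 (sg0 + d) ltac:(by rewrite ltrDl).
  move: E; rewrite [sg0 + d]addrC addrK => E.
  have h := lexx (d%:E); rewrite -{2}E in h; exact: h.
rewrite /cond_exp_len un invrK.
have hs : ((p A0 * d)%:E <= \sum_(A : {set Lam L} | a \in A)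
    (p A)%:E * line_len th t (S1 A `&` ~` Qsq [:: a]))%E.
  rewrite (bigD1 A0) //=.
  apply: le_trans (leeDl _ _); last first.
    apply: sume_ge0 => A _; apply: mule_ge0; last exact: measure_ge0.
    by rewrite lee_fin; case: gm => [p0 _]; exact: p0.
  rewrite EFinM; apply: lee_pmul => //; rewrite lee_fin ?ltW //.
have -> : p A0 * r * L%:R / 4 / L%:R = p A0 * d * L%:R.
  by rewrite /d; field; rewrite gt_eqF.
rewrite EFinM; apply: lee_pmul => //; rewrite lee_fin; apply: mulr_ge0; exact: ltW.




Qed.

Lemma vert_pair (R : realType) (L : nat) (p : {set Lam L} -> R) :
  grid_model p -> ~ vert_degenerate p ->
  exists A (a b : Lam L), 0 < p A /\ a \in A /\ b \in A /\ a != b /\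
    (a.1 : nat) = b.1.
Proof.
move=> gm nvd; apply: contrapT => Hn; apply: nvd => A pA i.
set C := [set j : 'I_L | (i, j) \in A].
have C1 : (#|C| <= 1)%N.
  rewrite leqNgt; apply/negP => /card_gt1P [j [j' [jC j'C jj']]].
  apply: Hn; exists A, (i, j), (i, j'); rewrite !inE in jC j'C.
  do 4 (split => //).
  by rewrite xpair_eqE negb_and jj' orbT.
have C0 : (0 < #|C|)%N.
  rewrite lt0n; apply/negP => /eqP C0; apply: Hn.
  apply: (@comb_line _ _ p (fun b => nat_of_ord b.1)) => //.
  exists A, (nat_of_ord i); split => //; split; first exact: ltn_ord.
  move=> b bA; apply/negP => /eqP eb.
  have : b.2 \in C.
    rewrite /C inE (_ : i = b.1) /=; first by rewrite -surjective_pairing.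
    exact: val_inj.
  by rewrite (card0_eq C0).
by apply/eqP; rewrite eqn_leq C1 C0.
Qed.

Lemma horiz_pair (R : realType) (L : nat) (p : {set Lam L} -> R) :
  grid_model p -> ~ horiz_degenerate p ->
  exists A (a b : Lam L), 0 < p A /\ a \in A /\ b \in A /\ a != b /\
    (a.2 : nat) = b.2.
Proof.
move=> gm nvd; apply: contrapT => Hn; apply: nvd => A pA j.
set C := [set i : 'I_L | (i, j) \in A].
have C1 : (#|C| <= 1)%N.
  rewrite leqNgt; apply/negP => /card_gt1P [i [i' [iC i'C ii']]].
  apply: Hn; exists A, (i, j), (i', j); rewrite !inE in iC i'C.
  do 4 (split => //).
  by rewrite xpair_eqE negb_and ii'.
have C0 : (0 < #|C|)%N.
  rewrite lt0n; apply/negP => /eqP C0; apply: Hn.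
  apply: (@comb_line _ _ p (fun b => nat_of_ord b.2)) => //.
  exists A, (nat_of_ord j); split => //; split; first exact: ltn_ord.
  move=> b bA; apply/negP => /eqP eb.
  have : b.1 \in C.
    rewrite /C inE (_ : j = b.2) /=; first by rewrite -surjective_pairing.
    exact: val_inj.
  by rewrite (card0_eq C0).
by apply/eqP; rewrite eqn_leq C1 C0.
Qed.

Theorem lemma4p10 (R : realType) (L : nat) (p : {set Lam L} -> R) :
  (2 <= L)%N -> grid_model p -> uniform p ->
  (forall th : R, 0 < th < pi -> th != pi / 2 ->
     exists (k : nat) (c : R), 0 < c /\ LEI p k th c !=set0) /\
  (~ vert_degenerate p ->
     exists (k : nat) (c : R), 0 < c /\ LEI p k (pi / 2) c !=set0) /\
  (~ horiz_degenerate p ->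
     exists (k : nat) (c : R), 0 < c /\ LEI p k 0 c !=set0).
Proof.
move=> L2 gm un; split; [|split].
- move=> th hth hpi.
  have s0 : 0 < sin th by apply: sin_gt0_pi.
  have c0 : cos th != 0.
    apply/negP => /eqP c0; move/negP: hpi; apply; apply/eqP.
    have pi0 : (0 : R) < pi := pi_gt0 R.
    apply: cos_inj; rewrite ?cos_pihalf //.
    + by rewrite in_itv /=; case/andP: hth => h1 h2; rewrite !ltW.
    + by rewrite in_itv /=; apply/andP; split; lra.
  have [A [a [b [pA [aA [bA [ab hal]]]]]]] := @comb_diag _ _ p _ _ L2 gm un s0 c0.
  exact: (@geo _ _ p th L2 gm un (ltW s0) _ _ _ pA aA bA ab hal).
- move=> nvd; have [A [a [b [pA [aA [bA [ab e]]]]]]] := @vert_pair _ _ p gm nvd.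
  apply: (@geo _ _ p (pi / 2) L2 gm un _ _ _ _ pA aA bA ab); rewrite sin_pihalf ?cos_pihalf //.
  by rewrite /gg e !mulr0 !addr0 subrr normr0 addr0 ltr01.
- move=> nvd; have [A [a [b [pA [aA [bA [ab e]]]]]]] := @horiz_pair _ _ p gm nvd.
  apply: (@geo _ _ p 0 L2 gm un _ _ _ _ pA aA bA ab); rewrite sin0 ?cos0 //.
  by rewrite /gg e !mulr0 subrr normr0 normr1; lra.
Qed.
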